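(* Let $p\in\mathcal{X}$. Then there exists a unique forkless polynomial $q\in\mathcal{X}$ such that $p\equiv q\pmod{\mathcal{J}}$.
   Context: Let $\mathbf{k}$ be a commutative ring, let $\beta,\alpha\in\mathbf{k}$, and let $n$ be a positive integer. Let $\mathcal{X}=\mathbf{k}[x_{i,j}\mid 1\le i<j\le n]$ be the polynomial ring over $\mathbf{k}$ in the indeterminates $x_{i,j}$, and $\mathfrak{M}$ the set of monomials in them. Let $\mathcal{J}$ be the ideal of $\mathcal{X}$ generated by all elements $x_{i,j}x_{j,k}-x_{i,k}(x_{i,j}+x_{j,k}+\beta)-\alpha$ for $1\le i<j<k\le n$. A monomial $\mathfrak{m}\in\mathfrak{M}$ is forkless if there is no triple $1\le i<j<k\le n$ with $x_{i,j}x_{i,k}\mid\mathfrak{m}$; a polynomial is forkless if it is a $\mathbf{k}$-linear combination of forkless monomials. *)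

(* Defs.v *)
From HB Require Import structures.
From mathcomp Require Import all_boot all_order all_algebra.
Set Implicit Arguments. Unset Strict Implicit. Unset Printing Implicit Defensive.
Import GRing.Theory.
Local Open Scope ring_scope.

Definition Var (n : nat) := {ij : 'I_n * 'I_n | (ij.1 < ij.2)%N}.

Definition mono (n : nat) := {ffun Var n -> nat}.
Definition mono1 n : mono n := [ffun _ => 0%N].
Definition monoM n (a b : mono n) : mono n := [ffun v => (a v + b v)%N].
(* the monomial x_{i,j} (meaningful for i < j) *)
Definition mvar n (i j : 'I_n) : mono n :=
  [ffun v : Var n => nat_of_bool (((val v).1 == i) && ((val v).2 == j))].

(* polynomials as formal finite sums of terms (coefficient, monomial);
   two representations denote the same polynomial iff they have the same
   coefficient function [coef]. *)
Definition mpoly (R : comPzRingType) (n : nat) := seq (R * mono n).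
Definition coef (R : comPzRingType) n (p : mpoly R n) (m : mono n) : R :=
  \sum_(t <- p | t.2 == m) t.1.
Definition peq (R : comPzRingType) n (p q : mpoly R n) : Prop :=
  forall m, coef p m = coef q m.

Definition pconst (R : comPzRingType) n (c : R) : mpoly R n := [:: (c, mono1 n)].
Definition pX (R : comPzRingType) n (i j : 'I_n) : mpoly R n := [:: (1, mvar i j)].
Definition padd (R : comPzRingType) n (p q : mpoly R n) : mpoly R n := p ++ q.
Definition popp (R : comPzRingType) n (p : mpoly R n) : mpoly R n :=
  [seq (- t.1, t.2) | t <- p].
Definition psub (R : comPzRingType) n (p q : mpoly R n) : mpoly R n := padd p (popp q).
Definition pmul (R : comPzRingType) n (p q : mpoly R n) : mpoly R n :=
  [seq (a.1 * b.1, monoM a.2 b.2) | a <- p, b <- q].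

Definition gen (R : comPzRingType) n (beta alpha : R) (i j k : 'I_n) : mpoly R n :=
  psub (psub (pmul (pX R i j) (pX R j k))
             (pmul (pX R i k) (padd (padd (pX R i j) (pX R j k)) (pconst n beta))))
       (pconst n alpha).

Definition inJ (R : comPzRingType) n (beta alpha : R) (f : mpoly R n) : Prop :=
  exists s : seq (mpoly R n * ('I_n * 'I_n * 'I_n)),
    (forall t, t \in s -> (t.2.1.1 < t.2.1.2 < t.2.2)%N) /\
    peq f (flatten [seq pmul t.1 (gen beta alpha t.2.1.1 t.2.1.2 t.2.2) | t <- s]).

Definition forkless_mono n (m : mono n) : Prop :=
  forall v w : Var n, (val v).1 = (val w).1 -> ((val v).2 < (val w).2)%N ->
    ~ ((0 < m v)%N /\ (0 < m w)%N).

Definition forkless (R : comPzRingType) n (q : mpoly R n) : Prop :=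
  forall m, coef q m != 0 -> forkless_mono m.

(* Main.v *)
Require Import Defs.
From HB Require Import structures.
From mathcomp Require Import all_boot all_order all_algebra.
From mathcomp Require Import zify ring.
Set Implicit Arguments. Unset Strict Implicit. Unset Printing Implicit Defensive.
Import GRing.Theory.
Local Open Scope ring_scope.


Section Dev.
Variable R : comPzRingType.
Variable n : nat.
Implicit Types (p q : mpoly R n) (m u : mono n).

Definition Lf (F : mono n -> R) (p : mpoly R n) : R := \sum_(t <- p) t.1 * F t.2.

Lemma Lf_nil F : Lf F [::] = 0.
Proof. by rewrite /Lf big_nil. Qed.
Lemma Lf_cons F t p : Lf F (t :: p) = t.1 * F t.2 + Lf F p.
Proof. by rewrite /Lf big_cons. Qed.
Lemma Lf_cat F p q : Lf F (p ++ q) = Lf F p + Lf F q.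
Proof. by rewrite /Lf big_cat. Qed.
Lemma Lf_popp F p : Lf F (popp p) = - Lf F p.
Proof. by rewrite /Lf /popp big_map /= -sumrN; apply: eq_bigr => t _; rewrite mulNr. Qed.
Lemma Lf_flatten F (ps : seq (mpoly R n)) : Lf F (flatten ps) = \sum_(p <- ps) Lf F p.
Proof. by rewrite /Lf big_flatten. Qed.
Lemma Lf_pmul F p q :
  Lf F (pmul p q) = Lf (fun u => Lf (fun v => F (monoM u v)) q) p.
Proof.
rewrite /Lf /pmul big_allpairs_dep /=; apply: eq_bigr => a _.
by rewrite mulr_sumr; apply: eq_bigr => b _; rewrite mulrA.
Qed.
Lemma Lf_pmul1 F c u q :
  Lf F (pmul [:: (c, u)] q) = c * Lf (fun v => F (monoM u v)) q.
Proof. by rewrite Lf_pmul Lf_cons Lf_nil addr0. Qed.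

Lemma coefLf p m : coef p m = Lf (fun u => (u == m)%:R) p.
Proof.
rewrite /coef /Lf big_mkcond; apply: eq_bigr => t _.
by case: (t.2 == m); rewrite /= ?mulr1 ?mulr0.
Qed.

Lemma Lf_undup F p : Lf F p = \sum_(u <- undup (map snd p)) coef p u * F u.
Proof.
rewrite /coef.
transitivity (\sum_(u <- undup (map snd p)) \sum_(t <- p) (if t.2 == u then t.1 * F t.2 else 0)).
  rewrite exchange_big /Lf; apply: eq_big_seq => t tp.
  rewrite (bigD1_seq t.2) /=; last exact: undup_uniq.
    rewrite eqxx big1 ?addr0 // => u hu.
    by case: eqP => // e; rewrite e eqxx in hu.
  by rewrite mem_undup; apply: map_f.
apply: eq_bigr => u _; rewrite [in RHS]big_mkcond mulr_suml; apply: eq_bigr => t _.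
by case: eqP => [->|_]; rewrite ?mul0r.
Qed.

Lemma Lf_zero F z : (forall m, coef z m = 0) -> Lf F z = 0.
Proof. by move=> h; rewrite Lf_undup big1 // => u _; rewrite h mul0r. Qed.

Lemma Lf_peq F p q : peq p q -> Lf F p = Lf F q.
Proof.
move=> h; apply/eqP; rewrite -subr_eq0 -Lf_popp -Lf_cat; apply/eqP; apply: Lf_zero.
by move=> m; rewrite !coefLf Lf_cat Lf_popp -!coefLf h subrr.
Qed.

Lemma peqP p q : (forall F, Lf F p = Lf F q) -> peq p q.
Proof. by move=> h m; rewrite !coefLf. Qed.

Lemma peq_refl p : peq p p. Proof. by []. Qed.
Lemma peq_sym p q : peq p q -> peq q p. Proof. by move=> h m. Qed.
Lemma peq_trans p q r : peq p q -> peq q r -> peq p r.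
Proof. by move=> h1 h2 m; rewrite h1. Qed.

End Dev.


Section Dev2.
Variable R : comPzRingType.
Variable n : nat.
Variables beta alpha : R.
Implicit Types (p q : mpoly R n) (m u : mono n).

Lemma monoMC (a b : mono n) : monoM a b = monoM b a.
Proof. by apply/ffunP => v; rewrite !ffunE addnC. Qed.
Lemma monoMA (a b c : mono n) : monoM a (monoM b c) = monoM (monoM a b) c.
Proof. by apply/ffunP => v; rewrite !ffunE addnA. Qed.
Lemma monoM1 (a : mono n) : monoM a (mono1 n) = a.
Proof. by apply/ffunP => v; rewrite !ffunE addn0. Qed.
Lemma mono1M (a : mono n) : monoM (mono1 n) a = a.
Proof. by apply/ffunP => v; rewrite !ffunE add0n. Qed.
Lemma monoM_inj (u u' a : mono n) : monoM u a = monoM u' a -> u = u'.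
Proof.
move=> h; apply/ffunP => v; have := congr1 (fun f : mono n => f v) h.
by rewrite !ffunE => /addIn.
Qed.

Definition wt (m : mono n) : nat := (\sum_(v : Var n) m v * (n - (val v).1))%N.

Lemma wtM a b : wt (monoM a b) = (wt a + wt b)%N.
Proof. by rewrite /wt -big_split /=; apply: eq_bigr => v _; rewrite ffunE mulnDl. Qed.
Lemma wt1 : wt (mono1 n) = 0%N.
Proof. by rewrite /wt big1 // => v _; rewrite ffunE. Qed.

Lemma mvarE (a b : 'I_n) (v : Var n) :
  mvar a b v = nat_of_bool (((val v).1 == a) && ((val v).2 == b)).
Proof. by rewrite /mvar ffunE. Qed.

Lemma var_eq (x y : Var n) : (val x).1 = (val y).1 -> (val x).2 = (val y).2 -> x = y.
Proof.
move=> h1 h2; apply: val_inj.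
by rewrite [val x]surjective_pairing [val y]surjective_pairing h1 h2.
Qed.

Lemma wt_mvar (a b : 'I_n) : (a < b)%N -> wt (mvar a b) = (n - a)%N.
Proof.
move=> hab; pose v0 : Var n := exist _ (a, b) hab.
rewrite /wt (bigD1 v0) //= big1 ?addn0.
  by rewrite mvarE /= !eqxx mul1n.
move=> v hv; rewrite mvarE.
case: andP => [[/eqP h1 /eqP h2]|] //=.
by move/negP: hv; case; apply/eqP; apply: var_eq.
Qed.

Definition trip := ('I_n * 'I_n * 'I_n)%type.
Definition valid (t : trip) := (t.1.1 < t.1.2 < t.2)%N.
Definition Rp' (P Q S : mono n) : mpoly R n :=
  [:: (1, monoM P S); (-1, monoM Q S); (- beta, Q); (- alpha, mono1 n)].
Definition Dt' (P Q S : mono n) : mpoly R n := (1, monoM P Q) :: popp (Rp' P Q S).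
Definition Lm (t : trip) := monoM (mvar t.1.1 t.1.2) (mvar t.1.1 t.2).
Definition Rp (t : trip) := Rp' (mvar t.1.1 t.1.2) (mvar t.1.1 t.2) (mvar t.1.2 t.2).
Definition DtT (t : trip) := Dt' (mvar t.1.1 t.1.2) (mvar t.1.1 t.2) (mvar t.1.2 t.2).

Lemma wt_Lm t : valid t -> wt (Lm t) = (2 * (n - t.1.1))%N.
Proof.
case/andP => h1 h2; rewrite /Lm wtM !wt_mvar //; last exact: ltn_trans h2.
by rewrite mul2n addnn.
Qed.

Lemma wt_Rp t : valid t -> forall a, a \in Rp t -> (wt a.2 < wt (Lm t))%N.
Proof.
move=> hv; have := hv; case/andP => h1 h2; have h3 : (t.1.1 < t.2)%N by exact: ltn_trans h2.
have hk : (t.2 < n)%N by [].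
rewrite wt_Lm // => a; rewrite !inE => /or4P [] /eqP -> /=;
  rewrite ?wtM ?wt1 ?wt_mvar //; lia.
Qed.

Definition le_m (a m : mono n) := [forall v, a v <= m v]%N.
Definition mdiv (m a : mono n) : mono n := [ffun v => m v - a v]%N.
Lemma mdivK a m : le_m a m -> monoM (mdiv m a) a = m.
Proof. by move/forallP=> h; apply/ffunP => v; rewrite !ffunE subnK. Qed.

Definition pickfork m : option trip := [pick t : trip | valid t && le_m (Lm t) m].
Lemma pickforkS m t : pickfork m = Some t -> valid t && le_m (Lm t) m.
Proof. by rewrite /pickfork; case: pickP => // x hx [<-]. Qed.

Definition red m t := pmul [:: (1, mdiv m (Lm t))] (Rp t).

Lemma red_w m t : valid t -> le_m (Lm t) m -> forall a, a \in red m t -> (wt a.2 < wt m)%N.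
Proof.
move=> hv hl a /allpairsP [[x y] [/= hx hy ->]] /=.
move: hx; rewrite inE => /eqP -> /=.
rewrite wtM -{2}(mdivK hl) [wt (monoM _ (Lm t))]wtM ltn_add2l.
exact: wt_Rp hv _ hy.
Qed.

Definition NPf (G : mono n -> mpoly R n) p : mpoly R n :=
  flatten [seq [seq (a.1 * s.1, s.2) | s <- G a.2] | a <- p].

Lemma Lf_NPf F G p : Lf F (NPf G p) = Lf (fun u => Lf F (G u)) p.
Proof.
rewrite Lf_flatten big_map; apply: eq_bigr => a _.
by rewrite /Lf big_map mulr_sumr; apply: eq_bigr => s _; rewrite mulrA.
Qed.

Lemma NPf_congr G G' p : (forall a, a \in p -> peq (G a.2) (G' a.2)) ->
  peq (NPf G p) (NPf G' p).
Proof.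
move=> h; apply: peqP => F; rewrite !Lf_NPf /Lf; apply: eq_big_seq => a ha.
by congr (_ * _); apply: Lf_peq; apply: h.
Qed.

Fixpoint Nf (k : nat) (m : mono n) : mpoly R n :=
  if k is k'.+1 then
    (if pickfork m is Some t then NPf (Nf k') (red m t) else [:: (1, m)])
  else [:: (1, m)].

Lemma Nf_stab W : forall m, (wt m < W)%N -> forall k1 k2,
  (wt m < k1)%N -> (wt m < k2)%N -> peq (Nf k1 m) (Nf k2 m).
Proof.
elim: W => // W IH m hm [|k1] [|k2] // h1 h2 /=.
case hp: (pickfork m) => [t|] //; apply: NPf_congr => a ha.
have /andP [hv hl] := pickforkS hp.
have := red_w hv hl ha => ha'; apply: IH; lia.
Qed.

Definition N m := Nf (wt m).+1 m.
Definition NP p := NPf N p.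

Lemma N_unfold m :
  peq (N m) (if pickfork m is Some t then NP (red m t) else [:: (1, m)]).
Proof.
rewrite /N /=; case hp: (pickfork m) => [t|] //; apply: NPf_congr => a ha.
have /andP [hv hl] := pickforkS hp.
have := red_w hv hl ha => ha'; apply: (@Nf_stab (wt m)); lia.
Qed.

Lemma Lf_NP F p : Lf F (NP p) = Lf (fun u => Lf F (N u)) p.
Proof. exact: Lf_NPf. Qed.

Lemma NP_peq p q : peq p q -> peq (NP p) (NP q).
Proof. by move=> h; apply: peqP => F; rewrite !Lf_NP; apply: Lf_peq. Qed.

Lemma Lf_nz (G : mono n -> R) p : Lf G p != 0 -> exists2 a, a \in p & G a.2 != 0.
Proof.
move=> h; case: (boolP (has (fun a => G a.2 != 0) p)) => [/hasP [a ha hG]|]; first by exists a.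
move/hasPn => hz; move/eqP: h; case; rewrite /Lf big1_seq // => a ha.
by have := hz a ha; rewrite negbK => /eqP ->; rewrite mulr0.
Qed.

Lemma pick_none_forkless m : pickfork m = None -> forkless_mono m.
Proof.
move=> h v x e lt [hv hx].
pose t : trip := ((val v).1, (val v).2, (val x).2).
have ht : valid t && le_m (Lm t) m.
  apply/andP; split; first by rewrite /valid /= lt andbT; exact: (valP v).
  apply/forallP => y; rewrite /Lm ffunE !mvarE /=.
  case E1: (((val y).1 == (val v).1) && ((val y).2 == (val v).2));
  case E2: (((val y).1 == (val v).1) && ((val y).2 == (val x).2)) => //=.
  - move/andP: E1 => [_ /eqP a]; move/andP: E2 => [_ /eqP b].
    by rewrite -a b ltnn in lt.
  - by move/andP: E1 => [/eqP a /eqP b]; rewrite (var_eq a b).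
  - by move/andP: E2 => [/eqP a /eqP b]; rewrite (var_eq (etrans a e) b).
move: h; rewrite /pickfork; case: pickP => [//|/(_ t)].
by rewrite ht.
Qed.

Lemma forkless_pick_none m : forkless_mono m -> pickfork m = None.
Proof.
move=> h; case hp: (pickfork m) => [t|] //; exfalso.
have /andP [/andP [h1 h2] /forallP hl] := pickforkS hp.
pose v : Var n := exist _ (t.1.1, t.1.2) h1.
pose x : Var n := exist _ (t.1.1, t.2) (ltn_trans h1 h2).
apply: (h v x) => //; split.
  by have := hl v; rewrite /Lm ffunE !mvarE /= !eqxx /=; lia.
by have := hl x; rewrite /Lm ffunE !mvarE /= !eqxx /=; lia.
Qed.

Lemma coef1 m m' : coef [:: (1 : R, m)] m' = (m == m')%:R.
Proof. by rewrite /coef big_cons big_nil /=; case: eqP; rewrite ?addr0. Qed.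

Lemma Nf_forkless m' k : forall m, (wt m < k)%N -> coef (Nf k m) m' != 0 -> forkless_mono m'.
Proof.
elim: k => // k IH m hm /=.
case hp: (pickfork m) => [t|].
  rewrite coefLf Lf_NPf => /Lf_nz [a ha].
  have /andP [hv hl] := pickforkS hp.
  have := red_w hv hl ha => ha'.
  by rewrite -coefLf; apply: IH; lia.
rewrite coef1; case: (m =P m') => [<- _|_]; first exact: pick_none_forkless.
by rewrite /= eqxx.
Qed.

Lemma N_forkless m m' : coef (N m) m' != 0 -> forkless_mono m'.
Proof. exact: Nf_forkless. Qed.

Lemma N_forkless_id m : forkless_mono m -> peq (N m) [:: (1, m)].
Proof. by move=> h; apply: peq_trans (N_unfold m) _; rewrite forkless_pick_none. Qed.

End Dev2.


Definition comb (R : comPzRingType) n (S : seq (R * mono n * mpoly R n)) : mpoly R n :=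
  flatten [seq pmul [:: x.1] x.2 | x <- S].

Lemma Lf_comb (R : comPzRingType) n F (S : seq (R * mono n * mpoly R n)) :
  Lf F (comb S) = \sum_(x <- S) x.1.1 * Lf (fun v => F (monoM x.1.2 v)) x.2.
Proof.
rewrite /comb Lf_flatten big_map; apply: eq_bigr => [[[c u] p]] _ /=.
by rewrite Lf_pmul1.
Qed.

Section Ident.
Variable R : comPzRingType.
Variable n : nat.
Variables beta alpha : R.
Variables X1 X2 X3 X4 X5 X6 w : mono n.

Definition v6 (e1 e2 e3 e4 e5 e6 : nat) : mono n :=
  [ffun v => e1 * X1 v + e2 * X2 v + e3 * X3 v + e4 * X4 v + e5 * X5 v + e6 * X6 v]%N.

Lemma v6M e1 e2 e3 e4 e5 e6 f1 f2 f3 f4 f5 f6 :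
  monoM (v6 e1 e2 e3 e4 e5 e6) (v6 f1 f2 f3 f4 f5 f6) =
  v6 (Nat.add e1 f1) (Nat.add e2 f2) (Nat.add e3 f3) (Nat.add e4 f4) (Nat.add e5 f5) (Nat.add e6 f6).
Proof. apply/ffunP => v; rewrite !ffunE -!plusE; lia. Qed.

Lemma wv6M e1 e2 e3 e4 e5 e6 f1 f2 f3 f4 f5 f6 :
  monoM (monoM w (v6 e1 e2 e3 e4 e5 e6)) (v6 f1 f2 f3 f4 f5 f6) =
  monoM w (v6 (Nat.add e1 f1) (Nat.add e2 f2) (Nat.add e3 f3) (Nat.add e4 f4) (Nat.add e5 f5) (Nat.add e6 f6)).
Proof. by rewrite -monoMA v6M. Qed.

Lemma X1E : X1 = v6 1 0 0 0 0 0. Proof. apply/ffunP => v; by rewrite !ffunE !mul0n ?mul1n ?addn0 ?add0n. Qed.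
Lemma X2E : X2 = v6 0 1 0 0 0 0. Proof. apply/ffunP => v; by rewrite !ffunE !mul0n ?mul1n ?addn0 ?add0n. Qed.
Lemma X3E : X3 = v6 0 0 1 0 0 0. Proof. apply/ffunP => v; by rewrite !ffunE !mul0n ?mul1n ?addn0 ?add0n. Qed.
Lemma X4E : X4 = v6 0 0 0 1 0 0. Proof. apply/ffunP => v; by rewrite !ffunE !mul0n ?mul1n ?addn0 ?add0n. Qed.
Lemma X5E : X5 = v6 0 0 0 0 1 0. Proof. apply/ffunP => v; by rewrite !ffunE !mul0n ?mul1n ?addn0 ?add0n. Qed.
Lemma X6E : X6 = v6 0 0 0 0 0 1. Proof. apply/ffunP => v; by rewrite !ffunE !mul0n ?mul1n ?addn0 ?add0n. Qed.
Lemma mono1E : mono1 n = v6 0 0 0 0 0 0. Proof. apply/ffunP => v; by rewrite !ffunE ?mul0n ?mul1n ?addn0 ?add0n. Qed.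

Ltac solve_id :=
  move=> F; rewrite Lf_comb !big_cons big_nil !Lf_pmul1 /Dt' /Rp' !Lf_cons ?Lf_popp ?Lf_cons !Lf_nil /=;
  rewrite ?X1E ?X2E ?X3E ?X4E ?X5E ?X6E ?mono1E;
  rewrite ?v6M ?wv6M; cbn [Nat.add]; ring.

Lemma ov1 : forall F,
  Lf F (pmul [:: (1, monoM w X3)] (Rp' beta alpha X1 X2 X4)) =
  Lf F (pmul [:: (1, monoM w X2)] (Rp' beta alpha X1 X3 X5)) +
  Lf F (comb [:: (1, monoM w X5, Dt' beta alpha X2 X3 X6);
                 (-1, monoM w X4, Dt' beta alpha X2 X3 X6);
                 (1, monoM w X4, Dt' beta alpha X1 X3 X5);
                 (-1, monoM w X3, Dt' beta alpha X4 X5 X6);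
                 (-1, monoM w X5, Dt' beta alpha X1 X2 X4);
                 (1, monoM w X2, Dt' beta alpha X4 X5 X6)]).
Proof. solve_id. Qed.

Lemma ov2 : forall F,
  Lf F (pmul [:: (1, monoM w X3)] (Rp' beta alpha X1 X2 X4)) =
  Lf F (pmul [:: (1, monoM w X1)] (Rp' beta alpha X2 X3 X6)) +
  Lf F (comb [:: (- beta, monoM w (mono1 n), Dt' beta alpha X2 X3 X6);
                 (-1, monoM w X4, Dt' beta alpha X2 X3 X6);
                 (beta, monoM w (mono1 n), Dt' beta alpha X1 X3 X5);
                 (1, monoM w X6, Dt' beta alpha X1 X3 X5);
                 (1, monoM w X4, Dt' beta alpha X1 X3 X5);
                 (-1, monoM w X3, Dt' beta alpha X4 X5 X6);
                 (1, monoM w X1, Dt' beta alpha X4 X5 X6);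
                 (-1, monoM w X6, Dt' beta alpha X1 X2 X4)]).
Proof. solve_id. Qed.

Lemma ov3 : forall F,
  Lf F (pmul [:: (1, monoM w (monoM X4 X5))] (Rp' beta alpha X1 X2 X3)) =
  Lf F (pmul [:: (1, monoM w (monoM X1 X2))] (Rp' beta alpha X4 X5 X6)) +
  Lf F (comb [:: (1, monoM w (monoM X1 X3), Dt' beta alpha X4 X5 X6);
                 (-1, monoM w (monoM X2 X3), Dt' beta alpha X4 X5 X6);
                 (- beta, monoM w X2, Dt' beta alpha X4 X5 X6);
                 (- alpha, monoM w (mono1 n), Dt' beta alpha X4 X5 X6);
                 (-1, monoM w (monoM X4 X6), Dt' beta alpha X1 X2 X3);
                 (1, monoM w (monoM X5 X6), Dt' beta alpha X1 X2 X3);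
                 (beta, monoM w X5, Dt' beta alpha X1 X2 X3);
                 (alpha, monoM w (mono1 n), Dt' beta alpha X1 X2 X3)]).
Proof. solve_id. Qed.

End Ident.


Section Main.
Variable R : comPzRingType.
Variable n : nat.
Variables beta alpha : R.
Implicit Types (p q : mpoly R n) (m u : mono n).

Local Notation N := (N beta alpha).
Local Notation NP := (NP beta alpha).
Local Notation Rp := (Rp beta alpha).
Local Notation Dt := (DtT beta alpha).

Definition goodA m := forall u t, valid t -> m = monoM u (Lm t) ->
  peq (N m) (NP (pmul [:: (1, u)] (Rp t))).

Definition Scond (W : nat) (S : seq (R * mono n * mpoly R n)) :=
  forall x, x \in S -> exists2 t, valid t & x.2 = Dt t /\ (wt (monoM x.1.2 (Lm t)) < W)%N.

Lemma NP_comb_zero W S : (forall m, (wt m < W)%N -> goodA m) -> Scond W S ->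
  forall F, Lf F (NP (comb S)) = 0.
Proof.
move=> IH hS F; rewrite Lf_NP Lf_comb big1_seq // => x hx.
have [t hv [-> hw]] := hS x hx.
rewrite /DtT /Dt' Lf_cons Lf_popp mul1r.
have := IH _ hw x.1.2 t hv erefl => /(Lf_peq F) ->.
by rewrite Lf_NP Lf_pmul1 mul1r subrr mulr0.
Qed.

Lemma NP_eq_of_comb W X Y S : (forall m, (wt m < W)%N -> goodA m) -> Scond W S ->
  (forall F, Lf F X = Lf F Y + Lf F (comb S)) -> peq (NP X) (NP Y).
Proof.
move=> IH hS h; apply: peqP => F.
by rewrite !Lf_NP h -[Lf _ (comb S)]Lf_NP (NP_comb_zero IH hS) addr0.
Qed.

Lemma le_m_M u a : le_m a (monoM u a).
Proof. by apply/forallP => v; rewrite ffunE leq_addl. Qed.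

Lemma mvar_le1 (a b : 'I_n) v : (mvar a b v <= 1)%N.
Proof. by rewrite mvarE; case: (_ && _). Qed.

Lemma mvar_excl (a b a' b' : 'I_n) v : ~ (a = a' :> nat /\ b = b' :> nat) ->
  (mvar a b v + mvar a' b' v <= 1)%N.
Proof.
move=> h; rewrite !mvarE.
case E1: (_ && _); case E2: (_ && _) => //=.
move/andP: E1 => [/eqP e1 /eqP e2]; move/andP: E2 => [/eqP e3 /eqP e4].
by exfalso; apply: h; rewrite -e1 -e2 -e3 -e4.
Qed.


Ltac in_split hx :=
  repeat (move: hx; rewrite in_cons => /predU1P [-> | hx]); last by rewrite in_nil in hx.

Lemma Kdisj m u0 u1 (c f : trip n) :
  (forall m', (wt m' < wt m)%N -> goodA m') -> valid c -> valid f ->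
  m = monoM u0 (Lm c) -> m = monoM u1 (Lm f) ->
  (c.1.1 <> f.1.1 :> nat \/ (c.1.2 <> f.1.2 :> nat /\ c.1.2 <> f.2 :> nat /\
                            c.2 <> f.1.2 :> nat /\ c.2 <> f.2 :> nat)) ->
  peq (NP (pmul [:: (1, u0)] (Rp c))) (NP (pmul [:: (1, u1)] (Rp f))).
Proof.
case: c => [[i0 j0] k0]; case: f => [[i j] k] /= IH /andP [h1 h2] /andP [h3 h4] e0 e1 hd.
rewrite /= in h1 h2 h3 h4 hd.
have h5 : (i0 < k0)%N by exact: ltn_trans h2.
have h6 : (i < k)%N by exact: ltn_trans h4.
have hn1 := ltn_ord k0; have hn2 := ltn_ord k.
have hle : le_m (monoM (Lm (i0, j0, k0)) (Lm (i, j, k))) m.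
  apply/forallP => v.
  have f0 := congr1 (fun g : mono n => g v) e0; have f1 := congr1 (fun g : mono n => g v) e1.
  rewrite /Lm /= !ffunE in f0 f1 *.
  have := mvar_le1 i0 j0 v; have := mvar_le1 i0 k0 v; have := mvar_le1 i j v; have := mvar_le1 i k v.
  have := @mvar_excl i0 j0 i0 k0 v ltac:(lia); have := @mvar_excl i j i k v ltac:(lia).
  have := @mvar_excl i0 j0 i j v ltac:(lia); have := @mvar_excl i0 j0 i k v ltac:(lia).
  have := @mvar_excl i0 k0 i j v ltac:(lia); have := @mvar_excl i0 k0 i k v ltac:(lia).
  rewrite !mvarE; lia.
pose w := mdiv m (monoM (Lm (i0, j0, k0)) (Lm (i, j, k))).
have hm : monoM w (monoM (Lm (i0, j0, k0)) (Lm (i, j, k))) = m := mdivK hle.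
have hu0 : u0 = monoM w (Lm (i, j, k)).
  apply: (monoM_inj (a := Lm (i0, j0, k0))); rewrite -e0 -monoMA (monoMC (Lm (i, j, k))) hm //.
have hu1 : u1 = monoM w (Lm (i0, j0, k0)).
  apply: (monoM_inj (a := Lm (i, j, k))); rewrite -e1 -monoMA hm //.
rewrite hu0 hu1.
apply: (NP_eq_of_comb IH _ (ov3 beta alpha (mvar i0 j0) (mvar i0 k0) (mvar j0 k0)
                                 (mvar i j) (mvar i k) (mvar j k) w)) => //.
move=> x hx; in_split hx;
  first [ (exists (i, j, k); [by rewrite /valid /= h3 h4 | split; [reflexivity |
             rewrite -hm /Lm /= !wtM ?wt1 !wt_mvar //; lia]])
        | (exists (i0, j0, k0); [by rewrite /valid /= h1 h2 | split; [reflexivity |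
             rewrite -hm /Lm /= !wtM ?wt1 !wt_mvar //; lia]]) ].
Qed.



Definition sel (i a b c : 'I_n) (s : nat) : trip n :=
  if s is 0 then (i, a, b) else if s is 1 then (i, a, c) else (i, b, c).
Definition comp (i a b c : 'I_n) (s : nat) : mono n :=
  if s is 0 then mvar i c else if s is 1 then mvar i b else mvar i a.

Ltac scond4 hm t1 t2 t3 t4 :=
  let tac t := (exists t; [by rewrite /valid /=; apply/andP; split | split; [reflexivity |
             rewrite -hm /Lm /= !wtM ?wt1 !wt_mvar //; lia]]) in
  first [ tac t1 | tac t2 | tac t3 | tac t4 ].

Lemma Kov m u0 u1 (i a b c : 'I_n) (s s' : nat) :
  (forall m', (wt m' < wt m)%N -> goodA m') ->
  (i < a)%N -> (a < b)%N -> (b < c)%N -> (s < 3)%N -> (s' < 3)%N ->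
  m = monoM u0 (Lm (sel i a b c s)) -> m = monoM u1 (Lm (sel i a b c s')) ->
  peq (NP (pmul [:: (1, u0)] (Rp (sel i a b c s)))) (NP (pmul [:: (1, u1)] (Rp (sel i a b c s')))).
Proof.
move=> IH hia hab hbc hs hs' e0 e1.
have hib : (i < b)%N by lia.
have hic : (i < c)%N by lia.
have hac : (a < c)%N by lia.
have hcn := ltn_ord c.
case: (s =P s') => [es | hne].
  rewrite -es in e1 *; have -> : u0 = u1 by apply: (monoM_inj (a := Lm (sel i a b c s))); rewrite -e0 -e1.
  exact: peq_refl.
pose T := monoM (monoM (mvar i a) (mvar i b)) (mvar i c).
have hT : le_m T m.
  apply/forallP => v.
  have f0 := congr1 (fun g : mono n => g v) e0; have f1 := congr1 (fun g : mono n => g v) e1.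
  have := mvar_le1 i a v; have := mvar_le1 i b v; have := mvar_le1 i c v.
  have := @mvar_excl i a i b v ltac:(lia); have := @mvar_excl i a i c v ltac:(lia).
  have := @mvar_excl i b i c v ltac:(lia).
  move: f0 f1; rewrite /T /Lm !ffunE.
  by case: s hs hne {e0} => [|[|[|?]]] //; case: s' hs' {e1} => [|[|[|?]]] //= _ _ _;
    rewrite ?ffunE ?mvarE; lia.
pose w := mdiv m T.
have hm : monoM w T = m := mdivK hT.
have hu : forall s u, (s < 3)%N -> m = monoM u (Lm (sel i a b c s)) -> u = monoM w (comp i a b c s).
  move=> s0 u hs0 e; apply: (monoM_inj (a := Lm (sel i a b c s0))); rewrite -e -hm.
  by case: s0 hs0 {e} => [|[|[|?]]] // _; apply/ffunP => v; rewrite /T /Lm /= !ffunE; lia.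
rewrite (hu _ _ hs e0) (hu _ _ hs' e1).
have z01 : peq (NP (pmul [:: (1, monoM w (comp i a b c 0))] (Rp (sel i a b c 0))))
               (NP (pmul [:: (1, monoM w (comp i a b c 1))] (Rp (sel i a b c 1)))).
  apply: (NP_eq_of_comb IH _ (ov1 beta alpha (mvar i a) (mvar i b) (mvar i c)
                                 (mvar a b) (mvar a c) (mvar b c) w)).
  move=> x hx; in_split hx; scond4 hm (i, a, b) (i, a, c) (i, b, c) (a, b, c).
have z02 : peq (NP (pmul [:: (1, monoM w (comp i a b c 0))] (Rp (sel i a b c 0))))
               (NP (pmul [:: (1, monoM w (comp i a b c 2))] (Rp (sel i a b c 2)))).
  apply: (NP_eq_of_comb IH _ (ov2 beta alpha (mvar i a) (mvar i b) (mvar i c)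
                                 (mvar a b) (mvar a c) (mvar b c) w)).
  move=> x hx; in_split hx; scond4 hm (i, a, b) (i, a, c) (i, b, c) (a, b, c).
case: s hs {e0 hne} => [|[|[|?]]] // _; case: s' hs' {e1} => [|[|[|?]]] // _;
  by [ exact: peq_refl | exact: z01 | exact: z02 | exact: peq_sym z01 | exact: peq_sym z02
     | exact: peq_trans (peq_sym z01) z02 | exact: peq_trans (peq_sym z02) z01 ].
Qed.


Lemma Kall m u0 u1 (c f : trip n) :
  (forall m', (wt m' < wt m)%N -> goodA m') -> valid c -> valid f ->
  m = monoM u0 (Lm c) -> m = monoM u1 (Lm f) ->
  peq (NP (pmul [:: (1, u0)] (Rp c))) (NP (pmul [:: (1, u1)] (Rp f))).
Proof.
move=> IH hc hf e0 e1.
case: (boolP [|| (c.1.1 != f.1.1 :> nat) |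
  [&& c.1.2 != f.1.2 :> nat, c.1.2 != f.2 :> nat, c.2 != f.1.2 :> nat & c.2 != f.2 :> nat]]) => Hd.
  apply: Kdisj IH hc hf e0 e1 _.
  case/orP: Hd => [/eqP h|/and4P [/eqP h1 /eqP h2 /eqP h3 /eqP h4]]; [by left | by right].
move: c f hc hf e0 e1 Hd => [[i0 j0] k0] [[i j] k] /andP [/= h1 h2] /andP [/= h3 h4] e0 e1 /= Hd.
have ei : i0 = i.
  apply: ord_inj; apply/eqP; move: Hd; by case: eqP.
subst i0.
have Hd2 : [|| j0 == j :> nat, j0 == k :> nat, k0 == j :> nat | k0 == k :> nat].
  by move: Hd; rewrite eqxx /=; case: (j0 == j :> nat); case: (j0 == k :> nat);
     case: (k0 == j :> nat); case: (k0 == k :> nat).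
case: (eqVneq (j0 : nat) j) => [ej|nej].
  have {ej} ej : j0 = j by apply: ord_inj.
  subst j0.
  case: (ltngtP k0 k) => [lt|gt|eq].
  - exact: (@Kov m u0 u1 i j k0 k 0 1 IH h1 h2 lt erefl erefl e0 e1).
  - exact: (@Kov m u0 u1 i j k k0 1 0 IH h1 h4 gt erefl erefl e0 e1).
  - have {eq} eq : k0 = k by apply: ord_inj.
    subst k0; have -> : u0 = u1 by apply: (monoM_inj (a := Lm (i, j, k))); rewrite -e0 -e1.
    exact: peq_refl.
case: (eqVneq (j0 : nat) k) => [ej|nek].
  have {ej} ej : j0 = k by apply: ord_inj.
  subst j0.
  exact: (@Kov m u0 u1 i j k k0 2 0 IH h3 h4 h2 erefl erefl e0 e1).
case: (eqVneq (k0 : nat) j) => [ek|nekj].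
  have {ek} ek : k0 = j by apply: ord_inj.
  subst k0.
  exact: (@Kov m u0 u1 i j0 j k 0 2 IH h1 h2 h4 erefl erefl e0 e1).
have ek : k0 = k.
  apply: ord_inj; apply/eqP; move: Hd2; by rewrite (negbTE nej) (negbTE nek) (negbTE nekj).
subst k0.
case: (ltngtP j0 j) => [lt|gt|eq].
- exact: (@Kov m u0 u1 i j0 j k 1 2 IH h1 lt h4 erefl erefl e0 e1).
- exact: (@Kov m u0 u1 i j j0 k 2 1 IH h3 gt h2 erefl erefl e0 e1).
- by move/eqP: nej; rewrite eq.
Qed.

Lemma goodA_all m : goodA m.
Proof.
have : forall W m, (wt m < W)%N -> goodA m.
  elim=> // W IHW m0 hw u t hv e.
  have IH : forall m', (wt m' < wt m0)%N -> goodA m' by move=> m' h; apply: IHW; lia.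
  apply: peq_trans (N_unfold _ _ m0) _.
  case hp: (pickfork m0) => [c|].
    have /andP [hc hl] := pickforkS hp.
    exact: (Kall IH hc hv (esym (mdivK hl)) e).
  move: hp; rewrite /pickfork; case: pickP => // /(_ t); rewrite hv e le_m_M //.
by move=> h; apply: (h (wt m).+1).
Qed.

End Main.


Section Final.
Variable R : comPzRingType.
Variable n : nat.
Variables beta alpha : R.
Implicit Types (p q : mpoly R n) (m u : mono n).

Local Notation N := (N beta alpha).
Local Notation NP := (NP beta alpha).
Local Notation Rp := (Rp beta alpha).
Local Notation Dt := (DtT beta alpha).

Definition inJ' (f : mpoly R n) :=
  exists s : seq (mpoly R n * ('I_n * 'I_n * 'I_n)),
    (forall t, t \in s -> (t.2.1.1 < t.2.1.2 < t.2.2)%N) /\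
    (forall F, Lf F f = Lf F (flatten [seq pmul t.1 (gen beta alpha t.2.1.1 t.2.1.2 t.2.2) | t <- s])).

Lemma inJ'_inJ f : inJ' f -> inJ beta alpha f.
Proof. by case=> s [h1 h2]; exists s; split => //; apply: peqP. Qed.
Lemma inJ_inJ' f : inJ beta alpha f -> inJ' f.
Proof. by case=> s [h1 h2]; exists s; split => // F; apply: Lf_peq. Qed.

Lemma inJ'_peq f g : (forall F, Lf F f = Lf F g) -> inJ' f -> inJ' g.
Proof. by move=> h [s [h1 h2]]; exists s; split => // F; rewrite -h. Qed.

Lemma inJ'_nil : inJ' [::].
Proof. by exists [::]; split. Qed.

Lemma inJ'_add f g : inJ' f -> inJ' g -> inJ' (padd f g).
Proof.
move=> [s1 [h1 h2]] [s2 [h3 h4]]; exists (s1 ++ s2); split.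
  by move=> t; rewrite mem_cat => /orP [/h1|/h3].
by move=> F; rewrite /padd map_cat flatten_cat !Lf_cat h2 h4.
Qed.

Lemma Lf_ext (G G' : mono n -> R) p : (forall u, G u = G' u) -> Lf G p = Lf G' p.
Proof. by move=> h; apply: eq_bigr => t _; rewrite h. Qed.

Lemma Lf_sum_swap A (G : mono n -> A -> R) (h : mpoly R n) (s : seq A) :
  Lf (fun u => \sum_(x <- s) G u x) h = \sum_(x <- s) Lf (fun u => G u x) h.
Proof.
rewrite /Lf /=; under eq_bigr do rewrite mulr_sumr.
by rewrite exchange_big.
Qed.

Lemma inJ'_mul h f : inJ' f -> inJ' (pmul h f).
Proof.
move=> [s [h1 h2]]; exists [seq (pmul h t.1, t.2) | t <- s]; split.
  by move=> t /mapP [x hx ->]; exact: (h1 x hx).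
move=> F; rewrite Lf_pmul.
rewrite (Lf_ext _ (fun u => h2 _)).
rewrite (Lf_ext _ (fun u => Lf_flatten _ _)).
rewrite Lf_flatten -map_comp big_map.
under [LHS]Lf_ext do rewrite big_map.
rewrite Lf_sum_swap; apply: eq_bigr => t _ /=.
rewrite Lf_pmul Lf_pmul; apply: Lf_ext => u.
rewrite Lf_pmul; apply: Lf_ext => y; apply: Lf_ext => v.
by rewrite monoMA.
Qed.

Lemma inJ'_gen h (t : trip n) : valid t ->
  inJ' (pmul h (gen beta alpha t.1.1 t.1.2 t.2)).
Proof.
move=> hv; exists [:: (h, t)]; split.
  by move=> x; rewrite inE => /eqP ->.
by move=> F; rewrite /= cats0.
Qed.

Lemma gen_Dt F (t : trip n) :
  Lf F (gen beta alpha t.1.1 t.1.2 t.2) = - Lf F (Dt t).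
Proof.
rewrite /gen /psub /padd /DtT /Dt' /Rp' !Lf_cat !Lf_popp !Lf_pmul /pX /pconst.
rewrite ?Lf_cons ?Lf_cat ?Lf_nil /= ?Lf_cons ?Lf_cat ?Lf_nil /= ?Lf_cons ?Lf_nil /=.
rewrite (monoMC (mvar t.1.1 t.2) (mvar t.1.1 t.1.2)) !monoM1; ring.
Qed.


Lemma Lf_Dt G (t : trip n) : Lf G (Dt t) = G (Lm t) - Lf G (Rp t).
Proof. by rewrite /DtT /Dt' Lf_cons Lf_popp mul1r. Qed.

Lemma Lf_psub F p q : Lf F (psub p q) = Lf F p - Lf F q.
Proof. by rewrite /psub /padd Lf_cat Lf_popp. Qed.

Lemma Dt_zero F u (t : trip n) : valid t ->
  Lf (fun v => Lf F (N (monoM u v))) (Dt t) = 0.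
Proof.
move=> hv; rewrite Lf_Dt.
have := @goodA_all _ _ beta alpha (monoM u (Lm t)) u t hv erefl => /(Lf_peq F) ->.
by rewrite Lf_NP Lf_pmul1 mul1r subrr.
Qed.

Lemma NP_J f : inJ' f -> forall F, Lf F (NP f) = 0.
Proof.
move=> [s [h1 h2]] F; rewrite Lf_NP h2 Lf_flatten big_map big1_seq // => t ht.
rewrite Lf_pmul {1}/Lf big1 // => a _ /=.
by rewrite gen_Dt (Dt_zero F a.2 (h1 t ht)) oppr0 mulr0.
Qed.

Lemma lemD r : (forall a, a \in r -> inJ' (psub [:: (1, a.2)] (N a.2))) ->
  inJ' (psub r (NP r)).
Proof.
elim: r => [_|a r IH h].
  by apply: inJ'_peq inJ'_nil => F; rewrite Lf_psub Lf_NP !Lf_nil subr0.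
have h1 := inJ'_mul [:: (a.1, mono1 n)] (h a (mem_head _ _)).
have h2 := IH (fun b hb => h b (@mem_behead _ (a :: r) _ hb)).
apply: inJ'_peq (inJ'_add h1 h2) => F.
rewrite /padd Lf_cat !Lf_psub Lf_pmul1 Lf_psub !Lf_NP !Lf_cons Lf_nil.
rewrite (Lf_ext _ (fun v => congr1 F (mono1M v))) /=.
rewrite mono1M; ring.
Qed.

Lemma lemC m : inJ' (psub [:: (1, m)] (N m)).
Proof.
have : forall W m, (wt m < W)%N -> inJ' (psub [:: (1, m)] (N m)); last by move=> h; exact: (h (wt m).+1).
elim=> // W IHW m0 hw.
have hN := N_unfold beta alpha m0.
case hp: (pickfork m0) hN => [c|] hN.
  have /andP [hc hl] := pickforkS hp.
  set u := mdiv m0 (Lm c).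
  have hA := inJ'_gen [:: (-1, u)] hc.
  have hB : inJ' (psub (red beta alpha m0 c) (NP (red beta alpha m0 c))).
    apply: lemD => a ha; apply: IHW.
    by rewrite ltnS in hw; exact: leq_trans (red_w hc hl ha) hw.
  apply: inJ'_peq (inJ'_add hA hB) => F.
  have hr : Lf F (red beta alpha m0 c) = Lf (fun v => F (monoM u v)) (Rp c).
    by rewrite /red Lf_pmul1 mul1r.
  rewrite /padd Lf_cat !Lf_psub Lf_pmul1 gen_Dt Lf_Dt (Lf_peq F hN) hr.
  have h1 : Lf F [:: (1, m0)] = F m0 by rewrite /Lf big_cons big_nil mul1r addr0.
  have h2 : F m0 = F (monoM u (Lm c)) by rewrite /u mdivK.
  rewrite h1 h2; ring.
apply: inJ'_peq inJ'_nil => F.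
by rewrite Lf_psub (Lf_peq F hN) subrr Lf_nil.
Qed.

End Final.

Theorem main_thm (R : comPzRingType) (beta alpha : R) (n : nat)
    (p : mpoly R n) :
  exists q : mpoly R n,
    [/\ forkless q, inJ beta alpha (psub p q) &
        forall q' : mpoly R n, forkless q' -> inJ beta alpha (psub p q') -> peq q' q].
Proof.
exists (NP beta alpha p); split.
- move=> m'; rewrite coefLf Lf_NP => /Lf_nz [a ha].
  by rewrite -coefLf => /N_forkless.
- apply: inJ'_inJ; apply: lemD => a _; exact: lemC.
- move=> q' hq' /inJ_inJ' hJ; apply: peqP => F.
  have := NP_J hJ F; rewrite Lf_NP Lf_psub -!Lf_NP => /eqP; rewrite subr_eq0 => /eqP ->.
  rewrite Lf_NP (Lf_undup F q') (Lf_undup (fun u => Lf F (N beta alpha u)) q').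
  apply: eq_big_seq => u _.
  case: (eqVneq (coef q' u) 0) => [->|hu]; first by rewrite !mul0r.
  by rewrite (Lf_peq F (N_forkless_id beta alpha (hq' u hu))) Lf_cons Lf_nil mul1r addr0.
Qed.



Unset Implicit Arguments.

Theorem theorem4p3 (R : comPzRingType) (beta alpha : R) (n : nat) (npos : (0 < n)%N)
    (p : mpoly R n) :
  exists q : mpoly R n,
    [/\ forkless q, inJ beta alpha (psub p q) &
        forall q' : mpoly R n, forkless q' -> inJ beta alpha (psub p q') -> peq q' q].
Proof.
exact: (main_thm beta alpha p).
Qed.
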